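(* Let $X$ be a CRSM on $E$ with extremal coefficient functional $\theta$, and let $K,K_1,K_2,\ldots\in\mathcal K$. Then $X(K_n)\to X(K)$ in probability as $n\to\infty$ if and only if $\theta(K_n)\to\theta(K)$ and $\theta(K_n\cup K)\to\theta(K)$.
   Context: $E$ is a locally compact Hausdorff second countable space; $\mathcal K$ its compact subsets. A sup-measure on $E$ is a Choquet capacity $\varphi$ (non-decreasing, $\varphi(\emptyset)=0$, $\varphi(A_n)\uparrow\varphi(A)$ if $A_n\uparrow A$, $\varphi(K_n)\downarrow\varphi(K)$ for compact $K_n\downarrow K$), finite on compacts, with $\varphi(\bigcup_j G_j)=\sup_j\varphi(G_j)$ for all families of open sets; a random sup-measure is a random element of the space of sup-measures (Borel $\sigma$-algebra of the sup-vague topology). $\mathrm{USC}$: bounded non-negative upper semicontinuous functions with relatively compact support. Extremal integral $\int^e f\,d\varphi=\sup\{\varphi(K)\inf_{x\in K}f(x):K\in\mathcal K\}$. Unit Fréchet with scale $a\ge0$: distribution function $\exp(-a/t)$, $t>0$. $X$ is max-stable if $\bigvee_iu_iX(K_i)$ is unit Fréchet for all $K_i\in\mathcal K$, $u_i\ge0$; tail dependence functional $\ell(f)$ = scale of $\int^e f\,dX$; extremal coefficient functional $\theta(K)=\ell(\mathbf 1_K)$. $X$ is a CRSM if it is max-stable and $\ell(f+g)=\ell(f)+\ell(g)$ for all $f,g\in\mathrm{USC}$ with $(f(x)-f(y))(g(x)-g(y))\ge0$ for all $x,y$. *)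

(* Defs.v *)
From HB Require Import structures.
From mathcomp Require Import all_boot all_order all_algebra.
From mathcomp Require Import all_classical all_reals all_analysis.
From mathcomp Require Import measurable_realfun.
Set Implicit Arguments. Unset Strict Implicit. Unset Printing Implicit Defensive.
Import Order.TTheory GRing.Theory Num.Theory.
Import numFieldNormedType.Exports.
Local Open Scope classical_set_scope.
Local Open Scope ring_scope.

Section Defs.
Context {R : realType} {E : topologicalType}.

Definition lchs_space : Prop :=
  [/\ locally_compact [set: E], hausdorff_space E & @second_countable E].

Definition sup_measure (phi : set E -> \bar R) : Prop :=
  [/\ (forall A B, A `<=` B -> (phi A <= phi B)%E),
      phi set0 = 0%E,
      (forall (A : nat -> set E) (B : set E),
          (forall n, A n `<=` A n.+1) -> (\bigcup_n A n) = B ->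
          phi \o A @ \oo --> phi B),
      (forall (K : nat -> set E) (L : set E),
          (forall n, compact (K n)) -> (forall n, K n.+1 `<=` K n) ->
          (\bigcap_n K n) = L -> phi \o K @ \oo --> phi L) &
      (forall K, compact K -> (phi K < +oo)%E) /\
      (forall F : set (set E), F `<=` open -> F !=set0 ->
          phi (\bigcup_(G in F) G) = ereal_sup (phi @` F))].

(* random sup-measure: each realization is a sup-measure and X is measurable
   for the Borel sigma-algebra of the sup-vague topology, i.e. the
   evaluations at compact and at open sets are measurable *)
Definition random_sup_measure {d} {T : measurableType d}
  (X : T -> set E -> \bar R) : Prop :=
  [/\ (forall w, sup_measure (X w)),
      (forall K, compact K -> measurable_fun setT (fun w => X w K)) &
      (forall G, open G -> measurable_fun setT (fun w => X w G))].

Definition frechet_scale {d} {T : measurableType d} (P : probability T R)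
  (Y : T -> \bar R) (a : R) : Prop :=
  [/\ measurable_fun setT Y, 0 <= a &
      forall t : R, 0 < t ->
        P [set w | (Y w <= t%:E)%E] = (expR (- (a / t)))%:E].

Definition USC (f : E -> R) : Prop :=
  [/\ (exists M : R, forall x, f x <= M),
      (forall x, 0 <= f x),
      (forall t : R, open [set x | f x < t]) &
      compact (closure [set x | f x != 0])].

Definition ext_integral (f : E -> R) (phi : set E -> \bar R) : \bar R :=
  ereal_sup [set (phi K * ereal_inf ((fun x => (f x)%:E) @` K))%E
            | K in [set K : set E | compact K]].

Definition max_stable {d} {T : measurableType d} (P : probability T R)
  (X : T -> set E -> \bar R) : Prop :=
  forall (n : nat) (K : 'I_n -> set E) (u : 'I_n -> R),
    (forall i, compact (K i)) -> (forall i, 0 <= u i) ->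
    exists a, frechet_scale P
      (fun w => \big[Order.max/0%E]_(i < n) ((u i)%:E * X w (K i))%E) a.

Definition tdf {d} {T : measurableType d} (P : probability T R)
  (X : T -> set E -> \bar R) (f : E -> R) : R :=
  xget 0 [set a | frechet_scale P (fun w => ext_integral f (X w)) a].

Definition ecf {d} {T : measurableType d} (P : probability T R)
  (X : T -> set E -> \bar R) (K : set E) : R :=
  tdf P X (\1_K).

Definition CRSM {d} {T : measurableType d} (P : probability T R)
  (X : T -> set E -> \bar R) : Prop :=
  [/\ random_sup_measure X, max_stable P X &
      forall f g, USC f -> USC g ->
        (forall x y, 0 <= (f x - f y) * (g x - g y)) ->
        tdf P X (f \+ g) = tdf P X f + tdf P X g].

Definition cvg_in_prob {d} {T : measurableType d} (P : probability T R)
  (Y : nat -> T -> R) (Z : T -> R) : Prop :=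
  forall eps : R, 0 < eps ->
    (fun n => P [set w | eps < `|Y n w - Z w|]) @ \oo --> 0%E.

End Defs.

(* Main.v *)
Require Import Defs.
From HB Require Import structures.
From mathcomp Require Import all_boot all_order all_algebra.
From mathcomp Require Import all_classical all_reals all_analysis.
From mathcomp Require Import measurable_realfun.
From mathcomp Require Import ring lra.
Import Order.TTheory GRing.Theory Num.Theory.
Import numFieldNormedType.Exports.
Local Open Scope classical_set_scope.
Local Open Scope ring_scope.
Section Topo.
Context {E : topologicalType}.

Lemma cpt_nbhd (A : set E) : locally_compact [set: E] -> compact A ->
  exists U W, [/\ open U, compact W, A `<=` U & U `<=` W].
Proof.
move=> lc cA.
have hV : forall x : E, exists V : set E, nbhs x V /\ compact V.
  move=> x; have [V hV [cV _]] := lc x I.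
  by exists V; split => //; move: hV; rewrite withinET.
have [V hVx] := choice hV.
pose F := filter_from [set: seq E] (fun s0 => [set s : seq E | {subset s0 <= s}]).
have FF : Filter F.
  apply: filter_from_filter; first by exists [::].
  move=> s1 s2 _ _; exists (s1 ++ s2) => // s /= H; split => y Hy; apply: H;
    by rewrite mem_cat Hy ?orbT.
have := (proj1 (compact_near_coveringP A) cA) (seq E) F
  (fun s x => exists2 y, y \in s & (V y)° x) FF.
case.
- move=> x Ax; exists ((V x)°, [set s : seq E | {subset [:: x] <= s}]).
    split; first exact: nbhs_interior (proj1 (hVx x)).
    by exists [:: x].
  case=> x' s [/= Hx' Hs]; exists x => //; apply: Hs; exact: mem_head.
move=> s0 _ Hs0.
have := Hs0 s0 (fun y Hy => Hy) => Hcov.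
exists (\bigcup_(y in [set` s0]) (V y)°), (\big[setU/set0]_(y <- s0) V y).
split.
- by apply: bigcup_open => y _; exact: open_interior.
- by apply: bigsetU_compact => y _; exact: (proj2 (hVx y)).
- by move=> x /Hcov [y ys Vy]; exists y.
- rewrite -bigcup_seq; move=> x [y ys Vy]; exists y => //.
  exact: interior_subset.
Qed.

Lemma cpt_shrink (A : set E) : locally_compact [set: E] -> hausdorff_space E ->
  @second_countable E -> compact A ->
  exists (C G : nat -> set E), [/\ forall n, compact (C n), forall n, open (G n),
    forall n, A `<=` G n /\ G n `<=` C n, forall n, C n.+1 `<=` C n &
    \bigcap_n C n = A].
Proof.
move=> lc hT [B cB bB] cA.
have [U [W [oU cW AU UW]]] := cpt_nbhd A lc cA.
have /countable_injP [f finj] := cB.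
pose Dj (b : set E) := closure b `&` A = set0.
pose Q n := [set x | forall b, B b -> f b = n -> Dj b -> ~ b x].
pose O n := [set x | forall b, B b -> f b = n -> Dj b -> ~ closure b x].
pose C n := W `&` [set x | forall k, (k < n)%N -> Q k x].
pose G n := U `&` [set x | forall k, (k < n)%N -> O k x].
have clQ n : closed (Q n).
  have -> : Q n = \bigcap_(b in [set b | B b /\ f b = n /\ Dj b]) ~` b.
    apply/seteqP; split => x /=.
      by move=> H b [Bb [fb Db]]; exact: H.
    by move=> H b Bb fb Db; exact: (H b (conj Bb (conj fb Db))).
  apply: closed_bigI => b [Bb _]; apply: open_closedC; exact: (proj1 bB).
have oO n : open (O n).
  have [[b0 [Bb0 [fb0 Db0]]]|nb] := pselect (exists b, B b /\ f b = n /\ Dj b).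
    have -> : O n = ~` closure b0.
      apply/seteqP; split => x /=.
        by move=> H; exact: (H b0).
      move=> H b Bb fb Db; have -> // : b = b0.
      by apply: finj; rewrite ?inE // fb fb0.
    apply: closed_openC; exact: closed_closure.
  have -> : O n = setT.
    apply/seteqP; split => x //= _ b Bb fb Db; exfalso; apply: nb; exists b; done.
  exact: openT.
have AO n : A `<=` O n.
  by move=> x Ax b Bb fb Db clb; have : (closure b `&` A) x by []; rewrite Db.
have OQ n : O n `<=` Q n.
  by move=> x Ox b Bb fb Db bx; apply: (Ox b Bb fb Db); exact: subset_closure.
exists C, G; split.
- move=> n; apply: compact_closedI => //.
  have -> : [set x | forall k, (k < n)%N -> Q k x] = \bigcap_(k in [set k | (k < n)%N]) Q k.
    by apply/seteqP; split => x /= H k Hk; exact: H.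
  by apply: closed_bigI => k _; exact: clQ.
- move=> n; apply: openI => //; elim: n => [|n IH].
    have -> : [set x : E | forall k, (k < 0)%N -> O k x] = setT by apply/seteqP; split => x.
    exact: openT.
  have -> : [set x | forall k, (k < n.+1)%N -> O k x] =
      [set x | forall k, (k < n)%N -> O k x] `&` O n.
    apply/seteqP; split => x /=.
      by move=> H; split; [move=> k Hk; apply: H; exact: ltnW|exact: H].
    move=> [H1 H2] k; rewrite ltnS leq_eqVlt => /orP[/eqP->//|]; exact: H1.
  exact: openI.
- move=> n; split.
    by move=> x Ax; split; [exact: AU|move=> k _; exact: AO].
  by move=> x [Ux Ox]; split; [exact: UW|move=> k Hk; apply: OQ; exact: Ox].
- by move=> n x [Wx Hx]; split => // k Hk; apply: Hx; exact: ltnW.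
apply/seteqP; split; last first.
  move=> x Ax n _; split; first by apply: UW; exact: AU.
  by move=> k _; apply: OQ; exact: AO.
move=> x Hx; apply: contrapT => nAx.
have [V hV [cV _]] := lc x I; move: hV; rewrite withinET => hV.
have reg := compact_regular hT cV hV.
have nA : nbhs x (~` A).
  apply: open_nbhs_nbhs; split => //; apply: closed_openC; exact: compact_closed.
have [M nM clM] := reg _ nA.
have [b [Bb bx] bM] := (proj2 bB x) M nM.
have Db : Dj b.
  apply/seteqP; split => // y [clby Ay].
  have : closure M y by apply: (closureS bM).
  by move/clM.
have [_ Hq] := Hx (f b).+1 I.
exact: (Hq (f b) (ltnSn _) b Bb erefl Db bx).
Qed.
End Topo.
Lemma ev_lt {R : realType} (u : nat -> \bar R) (a v : \bar R) :
  a \is a fin_num -> u @ \oo --> a -> (a < v)%E -> \forall n \near \oo, (u n < v)%E.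
Proof.
move=> /EFin_fin_numP[r ->] /fine_cvgP [hfin hc] hv.
case: v hv => [s| |] //= hv.
- rewrite lte_fin in hv.
  have H2 : \forall n \near \oo, fine (u n) < s by exact: cvgr_lt hc _ hv.
  near=> n; have fn : u n \is a fin_num by near: n; exact: hfin.
  have ln : fine (u n) < s by near: n; exact: H2.
  by rewrite -(fineK fn) lte_fin.
- apply: filterS hfin => n fn.
  by rewrite -(fineK fn) ltry.
Unshelve. all: by end_near. Qed.

Lemma maxit {R : realType} (E : topologicalType) (phi : set E -> \bar R) (A B : set E) :
  lchs_space (E:=E) -> sup_measure phi -> compact A -> compact B ->
  (phi (A `|` B) <= maxe (phi A) (phi B))%E.
Proof.
move=> [lc hT sc] [mono p0 up down [fin sup]] cA cB.
have [CA [GA [cCA oGA AGC dCA iCA]]] := cpt_shrink A lc hT sc cA.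
have [CB [GB [cCB oGB BGC dCB iCB]]] := cpt_shrink B lc hT sc cB.
have h n : (phi (A `|` B) <= maxe (phi (CA n)) (phi (CB n)))%E.
  pose F := [set G | G = GA n \/ G = GB n].
  have UF : \bigcup_(G in F) G = GA n `|` GB n.
    apply/seteqP; split => x.
      by move=> [G [->|->] Gx]; [left|right].
    by case=> Hx; [exists (GA n); [left|]|exists (GB n); [right|]].
  apply: (@le_trans _ _ (phi (GA n `|` GB n))).
    apply: mono => x [Ax|Bx]; [left; exact: (proj1 (AGC n))|right; exact: (proj1 (BGC n))].
  rewrite -UF sup; last 2 first.
  - by move=> G [->|->].
  - by exists (GA n); left.
  apply: ub_ereal_sup => _ [G [->|->] <-]; rewrite le_max.
    by rewrite mono //; exact: (proj2 (AGC n)).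
  by rewrite (mono _ (CB n)) ?orbT //; exact: (proj2 (BGC n)).
have finA : phi A \is a fin_num.
  by rewrite fin_numElt fin // andbT (lt_le_trans _ (_ : 0 <= phi A)%E) // -p0 mono.
have finB : phi B \is a fin_num.
  by rewrite fin_numElt fin // andbT (lt_le_trans _ (_ : 0 <= phi B)%E) // -p0 mono.
rewrite leNgt; apply/negP; rewrite gt_max => /andP[ltA ltB].
have hA := ev_lt _ _ _ finA (down CA A cCA dCA iCA) ltA.
have hB := ev_lt _ _ _ finB (down CB B cCB dCB iCB) ltB.
have [n [hAn hBn]] := filter_ex (filterI hA hB).
have := h n; rewrite leNgt; apply/negP; rewrite gt_max hAn hBn //.
Qed.

Lemma sm_ge0 {R : realType} (E : topologicalType) (phi : set E -> \bar R) A :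
  sup_measure phi -> (0 <= phi A)%E.
Proof. by move=> [mono p0 _ _ _]; rewrite -p0 mono. Qed.

Lemma ext_ind {R : realType} (E : topologicalType) (phi : set E -> \bar R) (K : set E) :
  sup_measure phi -> compact K -> ext_integral (\1_K) phi = phi K.
Proof.
move=> sm cK; have [mono p0 up dn [fin sup]] := sm.
have inf1 (C : set E) : C `<=` K -> C !=set0 ->
    ereal_inf [set ((\1_K x : R))%:E | x in C] = 1%E.
  move=> CK [x0 Cx0].
  have -> : [set ((\1_K x : R))%:E | x in C] = [set 1%E].
    apply/seteqP; split => y.
      by move=> [x Cx <-]; rewrite indicE mem_set //; exact: CK.
    by move=> ->; exists x0 => //; rewrite indicE mem_set //; exact: CK.
  by rewrite ereal_inf1.
apply/eqP; rewrite eq_le; apply/andP; split.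
- apply: ge_ereal_sup => _ [C cC <-].
  have [CK|nCK] := pselect (C `<=` K).
    have [->|nC0] := eqVneq C set0; first by rewrite p0 mul0e (sm_ge0 _ _ _ sm).
    rewrite inf1 //; last exact/set0P.
    by rewrite mule1 mono.
  have [x [Cx nKx]] : exists x, C x /\ ~ K x.
    apply: contrapT => H; apply: nCK => x Cx; apply: contrapT => nKx.
    by apply: H; exists x.
  have -> : ereal_inf [set ((\1_K x : R))%:E | x in C] = 0%E.
    apply/eqP; rewrite eq_le; apply/andP; split.
      apply: ereal_inf_lbound; exists x => //.
      by rewrite indicE memNset.
    by apply/ereal_infP => _ [y _ <-]; rewrite lee_fin indicE.
  by rewrite mule0 (sm_ge0 _ _ _ sm).
- apply: ereal_sup_ubound; exists K => //.
  have [->|nK0] := eqVneq K set0; first by rewrite p0 mul0e.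
  by rewrite inf1 ?mule1 //; exact/set0P.
Qed.

Section XFacts.
Context {R : realType} {E : topologicalType} {d : measure_display}
  {T : measurableType d} (P : probability T R) (X : T -> set E -> \bar R).
Hypothesis hX : CRSM P X.

Lemma X_ge0 w A : (0 <= X w A)%E.
Proof. by case: hX => -[sm _ _] _ _; exact: sm_ge0 (sm w). Qed.

Lemma X_fin w K : compact K -> X w K \is a fin_num.
Proof.
case: hX => -[sm _ _] _ _ cK; have [_ _ _ _ [fin _]] := sm w.
by rewrite fin_numElt (fin _ cK) andbT (lt_le_trans _ (X_ge0 w K)).
Qed.

Lemma ecf_scale K : compact K -> frechet_scale P (fun w => X w K) (ecf P X K).
Proof.
move=> cK; case: hX => -[sm mK mG] ms _.
have eqf : (fun w => ext_integral (\1_K) (X w)) = (fun w => X w K).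
  by apply: funext => w; exact: ext_ind.
rewrite /ecf /tdf eqf; apply: xgetPex.
have [a Ha] := ms 1%N (fun _ => K) (fun _ => 1) (fun _ => cK) (fun _ => ler01).
have e w : \big[Order.max/0%E]_(i < 1%N) ((1%:E * X w K)%E) = X w K.
  rewrite unlock /reducebig /index_enum /= -enumT enum_ordSl /= mul1e.
  by rewrite enum_ord0 /= max_l // X_ge0.
exists a; move: Ha; rewrite [X in frechet_scale _ X](_ : _ = (fun w => X w K)) //.
exact: funext e.
Qed.

Lemma ecf_ge0 K : compact K -> 0 <= ecf P X K.
Proof. by move=> cK; case: (ecf_scale K cK). Qed.

Lemma Y_meas K : compact K -> measurable_fun setT (fun w => fine (X w K)).
Proof.
move=> cK; case: hX => -[sm mK mG] _ _.
exact: (measurableT_comp (fine_measurable measurableT) (mK K cK)).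
Qed.

Lemma Y_ge0 w K : 0 <= fine (X w K).
Proof. exact: fine_ge0 (X_ge0 w K). Qed.

Lemma Y_cdf K : compact K -> forall t, 0 < t ->
  P [set w | fine (X w K) <= t] = (expR (- (ecf P X K / t)))%:E.
Proof.
move=> cK t t0; case: (ecf_scale K cK) => _ _ /(_ t t0) <-.
congr (P _); apply/seteqP; split => w /=.
  by rewrite -lee_fin fineK // X_fin.
by rewrite -lee_fin fineK // X_fin.
Qed.

End XFacts.

Section Prob.
Context {R : realType} {d : measure_display} {T : measurableType d} (P : probability T R).

Definition Fr (W : T -> R) (b : R) := forall t, 0 < t ->
  P [set w | W w <= t] = (expR (- (b / t)))%:E.

Definition mf (W : T -> R) := measurable_fun setT W.

Lemma m_le (W : T -> R) t : mf W -> measurable [set w | W w <= t].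
Proof.
move=> hW; have := measurable_fun_le measurableT hW (measurable_cst t).
by rewrite setTI.
Qed.

Lemma m_lt (W : T -> R) t : mf W -> measurable [set w | t < W w].
Proof.
move=> hW; have -> : [set w | t < W w] = ~` [set w | W w <= t].
  by apply/seteqP; split => w /=; rewrite ltNge => /negP.
exact: measurableC (m_le W t hW).
Qed.

Lemma pfin A : measurable A -> P A = (fine (P A))%:E.
Proof. by move=> mA; rewrite fineK // fin_num_measure. Qed.

Lemma fP_ge0 A : 0 <= fine (P A).
Proof. exact: fine_ge0 (measure_ge0 P A). Qed.

Lemma fP_le A B : measurable A -> measurable B -> A `<=` B -> fine (P A) <= fine (P B).
Proof.
move=> mA mB AB; rewrite -lee_fin -pfin // -pfin //.
by apply: le_measure; rewrite ?inE.
Qed.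

Lemma fP_U A B : measurable A -> measurable B -> fine (P (A `|` B)) <= fine (P A) + fine (P B).
Proof.
move=> mA mB; rewrite -lee_fin -pfin ?EFinD -?pfin //; last exact: measurableU.
exact: measureU2.
Qed.

Lemma fP_sub A B C : measurable A -> measurable B -> measurable C -> A `<=` B `|` C ->
  fine (P A) <= fine (P B) + fine (P C).
Proof.
move=> mA mB mC H; apply: le_trans (fP_U _ _ mB mC).
by apply: fP_le => //; exact: measurableU.
Qed.

Lemma fP_add A B : measurable A -> measurable B -> A `&` B = set0 ->
  fine (P (A `|` B)) = fine (P A) + fine (P B).
Proof.
move=> mA mB AB; apply/EFin_inj; rewrite EFinD -!pfin //; last exact: measurableU.
exact: measureU.
Qed.

Lemma Fr_fine W b t : Fr W b -> 0 < t -> fine (P [set w | W w <= t]) = expR (- (b / t)).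
Proof. by move=> hF t0; rewrite hF. Qed.
Arguments Fr_fine {W b t}.

Lemma fP_bigU (S : nat -> set T) N : (forall j, measurable (S j)) ->
  fine (P (\big[setU/set0]_(j < N) S j)) <= \sum_(j < N) fine (P (S j)).
Proof.
move=> mS; elim: N => [|N IH].
  by rewrite !big_ord0 measure0.
rewrite !big_ord_recr /=; apply: le_trans (fP_U _ _ _ _) _.
- exact: bigsetU_measurable.
- exact: mS.
by rewrite lerD2r.
Qed.

Definition wk (Wn : nat -> T -> R) (W : T -> R) := forall eps : R, 0 < eps -> forall eta : R, 0 < eta ->
  \forall n \near \oo, fine (P [set w | eps < `|Wn n w - W w|]) < eta.

Lemma m_dist (V W : T -> R) : mf V -> mf W -> mf (fun w => `|V w - W w|).
Proof.
move=> hV hW; apply: (measurableT_comp (@normr_measurable R setT)).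
exact: measurable_funB.
Qed.

Lemma cip_wk Wn W : cvg_in_prob P Wn W -> wk Wn W.
Proof.
move=> H eps e0 eta eta0.
have /fine_cvgP[_ h] := H eps e0.
exact: cvgr_lt h _ eta0.
Qed.

Lemma wk_cip Wn W : (forall n, mf (Wn n)) -> mf W -> wk Wn W -> cvg_in_prob P Wn W.
Proof.
move=> hWn hW H eps e0.
apply/fine_cvgP; split.
  by apply: nearW => n; rewrite fin_num_measure //; apply: m_lt; exact: m_dist.
apply/cvgrPdist_lt => eta eta0.
apply: filterS (H eps e0 eta eta0) => n hn /=.
by rewrite sub0r normrN ger0_norm ?fP_ge0.
Qed.


Lemma L1 (Wn : nat -> T -> R) W (bn : nat -> R) b :
  (forall n, mf (Wn n)) -> mf W -> (forall n, Fr (Wn n) (bn n)) -> Fr W b -> 0 <= b ->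
  wk Wn W -> bn @ \oo --> b.
Proof.
move=> hWn hW Fn F b0 H.
apply/cvgrPdist_lt => eta eta0.
have be0 : 0 < b + eta by lra.
pose e := eta / (2 * (b + eta)).
have key : e * (b + eta) = eta / 2.
  by rewrite /e; field; apply: lt0r_neq0.
have e0 : 0 < e by apply: divr_gt0 => //; lra.
have e1 : e < 1.
  have h : e * (b + eta) < 1 * (b + eta) by rewrite key; lra.
  by rewrite ltr_pM2r in h.
have s0 : 0 < 1 - e by lra.
pose p n := fine (P [set w | e < `|Wn n w - W w|]).
have mp n : measurable [set w | e < `|Wn n w - W w|] by apply: m_lt; exact: m_dist.
have i1 n : expR (- (b / (1 - e))) <= expR (- bn n) + p n.
  rewrite -(Fr_fine F s0) -[bn n]divr1 -(Fr_fine (Fn n) ltr01).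
  apply: fP_sub; [exact: m_le|exact: m_le|exact: mp|].
  move=> w /= hw; have [h|h] := leP (Wn n w) 1; [by left|right].
  rewrite /= ltNge; apply/negP; rewrite ler_norml => /andP[_ h3]; lra.
have i2 n : expR (- (bn n / (1 - e))) <= expR (- b) + p n.
  rewrite -(Fr_fine (Fn n) s0) -[b]divr1 -(Fr_fine F ltr01).
  apply: fP_sub; [exact: m_le|exact: m_le|exact: mp|].
  move=> w /= hw; have [h|h] := leP (W w) 1; [by left|right].
  rewrite /= ltNge; apply/negP; rewrite ler_norml => /andP[h3 _]; lra.
have g1 : 0 < expR (- (b / (1 - e))) - expR (- (b + eta)).
  rewrite subr_gt0 ltr_expR ltrN2 ltr_pdivrMr //.
  have -> : (b + eta) * (1 - e) = b + eta - e * (b + eta) by ring.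
  rewrite key; lra.
have g2 : 0 < expR (- ((b - eta) / (1 - e))) - expR (- b).
  rewrite subr_gt0 ltr_expR ltrN2 ltr_pdivrMr //.
  have : b * e <= (b + eta) * e by nra.
  rewrite [X in _ <= X]mulrC key => h; nra.
have h1 := H e e0 _ g1.
have h2 := H e e0 _ g2.
near=> n.
have p1 : p n < expR (- (b / (1 - e))) - expR (- (b + eta)) by near: n; exact: h1.
have p2 : p n < expR (- ((b - eta) / (1 - e))) - expR (- b) by near: n; exact: h2.
have i1n := i1 n; have i2n := i2 n.
have u1 : expR (- (b + eta)) < expR (- bn n) by lra.
have u2 : expR (- (bn n / (1 - e))) < expR (- ((b - eta) / (1 - e))) by lra.
rewrite ltr_expR ltrN2 in u1.
rewrite ltr_expR ltrN2 ltr_pM2r ?invr_gt0 // in u2.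
rewrite ltr_norml; apply/andP; split; lra.
Unshelve. all: by end_near. Qed.


Lemma LL (u v : R) : 0 <= u -> 0 <= v -> expR (- u) - expR (- v) <= `|u - v|.
Proof.
move=> u0 v0; have [vu|uv] := leP v u.
  have : expR (- u) <= expR (- v) by rewrite ler_expR lerN2.
  move=> h; apply: le_trans (normr_ge0 _); lra.
have e1 : expR (- v) = expR (- u) * expR (- (v - u)) by rewrite -expRD; congr expR; ring.
have h1 : 1 + - (v - u) <= expR (- (v - u)) := expR_ge1Dx _.
have h2 : expR (- u) <= 1 by rewrite expR_le1; lra.
have h3 : 0 < expR (- u) := expR_gt0 _.
have h4 : expR (- (v - u)) <= 1 by rewrite expR_le1; lra.
rewrite e1 ltr0_norm ?subr_lt0 //; nra.
Qed.

Lemma L2 (Zn Vn : nat -> T -> R) (cn an : nat -> R) (b : R) :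
  (forall n, mf (Zn n)) -> (forall n, mf (Vn n)) ->
  (forall n w, Vn n w <= Zn n w) -> (forall n w, 0 <= Vn n w) ->
  (forall n, Fr (Zn n) (cn n)) -> (forall n, Fr (Vn n) (an n)) ->
  (forall n, 0 <= an n) -> (forall n, 0 <= cn n) -> 0 <= b ->
  an @ \oo --> b -> cn @ \oo --> b ->
  forall eps, 0 < eps -> forall eta, 0 < eta ->
  \forall n \near \oo, fine (P [set w | eps < Zn n w - Vn n w]) < eta.
Proof.
move=> mZ mV VZ V0 FZ FV a0 c0 b0 ca cc eps e0 eta eta0.
pose dl := eps / 2.
have dl0 : 0 < dl by rewrite /dl; lra.
pose M := 4 * (b + 1) / eta.
have M0 : 0 < M by rewrite /M; apply: divr_gt0 => //; lra.
pose N := (Num.trunc (M / dl)).+1.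
have MN : M < N%:R * dl.
  have := truncn_itv (ltW (divr_gt0 M0 dl0)) => /andP[_].
  by rewrite -/N ltr_pdivrMr.
have N0 : 0 < (N%:R : R) by rewrite ltr0n.
pose t (j : nat) : R := (j.+1)%:R * dl.
have t0 j : dl <= t j.
  have h : (1:R) <= j.+1%:R by rewrite ler1n.
  rewrite /t; nra.
have tp j : 0 < t j by apply: lt_le_trans (t0 j).
pose D n j := [set w | Vn n w <= t j] `&` [set w | t j < Zn n w].
pose Bg n := [set w | M < Zn n w].
have mD n j : measurable (D n j) by apply: measurableI; [exact: m_le|exact: m_lt].
have mB n : measurable (Bg n) by exact: m_lt.
have incl n : [set w | eps < Zn n w - Vn n w] `<=` Bg n `|` \big[setU/set0]_(j < N) D n j.
  move=> w /= hw; have [h|h] := ltP M (Zn n w); [by left|right].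
  rewrite -bigcup_mkord.
  have := truncn_itv (divr_ge0 (V0 n w) (ltW dl0)).
  set k := Num.trunc _ => /andP[kl ku].
  rewrite ler_pdivlMr // in kl; rewrite ltr_pdivrMr // in ku.
  have ek : (k.+1%:R : R) = k%:R + 1 by rewrite natr1.
  have tk : t k = k%:R * dl + dl by rewrite /t ek; ring.
  have ek2 : eps = 2 * dl by rewrite /dl; field.
  exists k => /=.
    have : (k.+1%:R : R) * dl < N%:R * dl.
      rewrite -/(t k) tk; lra.
    by rewrite ltr_pM2r // ltr_nat => /ltnW.
  rewrite /D /= tk; split; lra.
have fD n j : fine (P (D n j)) <= `|an n - cn n| / dl.
  have eq1 : [set w | Vn n w <= t j] = D n j `|` [set w | Zn n w <= t j].
    apply/seteqP; split => w /=.
      move=> h; have [h2|h2] := ltP (t j) (Zn n w); [by left|by right].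
    by case=> [[]//|h]; apply: le_trans (VZ n w) h.
  have := fP_add _ _ (mD n j) (m_le _ (t j) (mZ n)) _.
  rewrite -eq1 (Fr_fine (FV n) (tp j)) (Fr_fine (FZ n) (tp j)).
  have dj : D n j `&` [set w | Zn n w <= t j] = set0.
    by apply/seteqP; split => w //= [[_ /= h1] h2]; move: h1; rewrite ltNge h2.
  move=> /(_ dj) h.
  have -> : fine (P (D n j)) = expR (- (an n / t j)) - expR (- (cn n / t j)) by lra.
  apply: (le_trans (LL (an n / t j) (cn n / t j) (divr_ge0 (a0 n) (ltW (tp j))) (divr_ge0 (c0 n) (ltW (tp j))))).
  rewrite -mulrBl normrM [`|_^-1|]gtr0_norm ?invr_gt0 // ler_wpM2l //.
  by rewrite lef_pV2 ?posrE.
have fB n : fine (P (Bg n)) <= cn n / M.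
  have eq1 : [set: T] = Bg n `|` [set w | Zn n w <= M].
    apply/seteqP; split => w //= _; have [h2|h2] := ltP M (Zn n w); [by left|by right].
  have dj : Bg n `&` [set w | Zn n w <= M] = set0.
    by apply/seteqP; split => w //= [h1 h2]; move: h1; rewrite /Bg /= ltNge h2.
  have := fP_add _ _ (mB n) (m_le _ M (mZ n)) dj.
  rewrite -eq1 probability_setT (Fr_fine (FZ n) M0) /= => h.
  have := expR_ge1Dx (- (cn n / M)); lra.
have bound n : fine (P [set w | eps < Zn n w - Vn n w]) <=
    cn n / M + N%:R * (`|an n - cn n| / dl).
  apply: le_trans (fP_sub _ _ _ _ (mB n) _ (incl n)) _.
  - by apply: m_lt; apply: measurable_funB; [exact: mZ|exact: mV].
  - exact: bigsetU_measurable.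
  apply: lerD; first exact: fB.
  apply: le_trans (fP_bigU _ _ (mD n)) _.
  apply: (le_trans (y := \sum_(j < N) (`|an n - cn n| / dl))); first by apply: ler_sum => j _; exact: fD.
  by rewrite sumr_const card_ord mulr_natl.
pose e' := eta * dl / (4 * N%:R).
have e'0 : 0 < e' by rewrite /e'; apply: divr_gt0; [apply: mulr_gt0|]; lra.
have hc1 : \forall n \near \oo, cn n < b + 1 by apply: cvgr_lt cc _ _; lra.
have ha := (proj1 (cvgrPdist_lt _ _) ca) _ e'0.
have hc := (proj1 (cvgrPdist_lt _ _) cc) _ e'0.
near=> n.
have c1 : cn n < b + 1 by near: n; exact: hc1.
have a2 : `|b - an n| < e' by near: n; exact: ha.
have c2 : `|b - cn n| < e' by near: n; exact: hc.
apply: le_lt_trans (bound n) _.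
have x1 : cn n / M < eta / 4.
  have -> : eta / 4 = (b + 1) / M by rewrite /M; field; apply/andP; split; apply: lt0r_neq0 => //; lra.
  by rewrite ltr_pM2r ?invr_gt0.
have x2 : `|an n - cn n| < 2 * e'.
  apply: le_lt_trans (ler_distD b _ _) _; rewrite distrC; lra.
have x3 : N%:R * (`|an n - cn n| / dl) < N%:R * (2 * e' / dl).
  by rewrite ltr_pM2l // ltr_pM2r ?invr_gt0.
have x4 : N%:R * (2 * e' / dl) = eta / 2.
  by rewrite /e'; field; apply/andP; split; apply: lt0r_neq0.
lra.
Unshelve. all: by end_near. Qed.

End Prob.

Theorem mainTheorem17 (R : realType) (E : topologicalType)
  (d : measure_display) (T : measurableType d) (P : probability T R)
  (X : T -> set E -> \bar R) (K : set E) (Kn : nat -> set E) :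
  lchs_space (E := E) -> CRSM P X ->
  compact K -> (forall n, compact (Kn n)) ->
  (cvg_in_prob P (fun n w => fine (X w (Kn n))) (fun w => fine (X w K)) <->
   ((fun n => ecf P X (Kn n)) @ \oo --> ecf P X K /\
    (fun n => ecf P X (Kn n `|` K)) @ \oo --> ecf P X K)).
Proof.
move=> lchs hX cK cKn.
have cZ n : compact (Kn n `|` K) by exact: compactU.
have sm w : sup_measure (X w) by case: hX => -[].
have Xf A w : compact A -> X w A \is a fin_num := fun cA => X_fin P X hX w A cA.
pose Yn n w := fine (X w (Kn n)).
pose Y w := fine (X w K).
pose Zn n w := fine (X w (Kn n `|` K)).
have mYn n : mf (Yn n) by exact: Y_meas hX _ (cKn n).
have mY : mf Y by exact: Y_meas hX _ cK.
have mZn n : mf (Zn n) by exact: Y_meas hX _ (cZ n).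
have FYn n : Fr P (Yn n) (ecf P X (Kn n)) by exact: Y_cdf hX _ (cKn n).
have FY : Fr P Y (ecf P X K) by exact: Y_cdf hX _ cK.
have FZn n : Fr P (Zn n) (ecf P X (Kn n `|` K)) by exact: Y_cdf hX _ (cZ n).
have le_f A B w : compact A -> compact B -> A `<=` B -> fine (X w A) <= fine (X w B).
  move=> cA cB AB; apply: fine_le; [exact: X_fin hX _ _ cA|exact: X_fin hX _ _ cB|].
  by case: (sm w) => mono _ _ _ _; exact: mono.
have YZ n w : Y w <= Zn n w by apply: le_f => // x Kx; right.
have YnZ n w : Yn n w <= Zn n w by apply: le_f => // x Kx; left.
have ZY n w : Zn n w - Y w <= `|Yn n w - Y w|.
  have h : Zn n w <= Num.max (Yn n w) (Y w).
    rewrite -lee_fin EFin_max /Zn /Yn /Y !fineK ?(Xf _ _ (cKn n)) ?(Xf _ _ cK) ?(Xf _ _ (cZ n)) //.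
    by apply: maxit => //; case: hX => -[].
  move: h; have [h2|h2] := leP (Yn n w) (Y w) => h.
    by apply: le_trans (normr_ge0 _); lra.
  by apply: le_trans (ler_norm _); lra.
have e0 : forall n, 0 <= ecf P X (Kn n) by move=> n; exact: ecf_ge0 hX _ (cKn n).
have eZ0 : forall n, 0 <= ecf P X (Kn n `|` K) by move=> n; exact: ecf_ge0 hX _ (cZ n).
have eK0 : 0 <= ecf P X K by exact: ecf_ge0 hX _ cK.
split.
- move=> /cip_wk H; split.
    exact: (L1 _ _ _ _ _ mYn mY FYn FY eK0 H).
  apply: (L1 _ _ _ _ _ mZn mY FZn FY eK0) => eps eps0 eta eta0.
  apply: filterS (H eps eps0 eta eta0) => n; apply: le_lt_trans.
  apply: fP_le; [exact: (m_lt _ _ (m_dist _ _ (mZn n) mY))|exact: (m_lt _ _ (m_dist _ _ (mYn n) mY))|].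
  move=> w /= h; apply: lt_le_trans h _.
  by rewrite ger0_norm ?subr_ge0 ?YZ ?ZY.
- move=> [ha hc]; apply: wk_cip => // eps eps0 eta eta0.
  have eta2 : 0 < eta / 2 by apply: divr_gt0.
  have h1 := L2 _ _ _ _ _ _ mZn (fun _ => mY) (fun n => YZ n) (fun _ w => Y_ge0 P X hX w K) FZn
    (fun _ => FY) (fun _ => eK0) eZ0 eK0 (cvg_cst _) hc eps eps0 (eta / 2) eta2.
  have h2 := L2 _ _ _ _ _ _ mZn mYn YnZ (fun n w => Y_ge0 P X hX w (Kn n)) FZn
    FYn e0 eZ0 eK0 ha hc eps eps0 (eta / 2) eta2.
  near=> n.
  have p1 : fine (P [set w | eps < Zn n w - Y w]) < eta / 2 by near: n; exact: h1.
  have p2 : fine (P [set w | eps < Zn n w - Yn n w]) < eta / 2 by near: n; exact: h2.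
  have mA : measurable [set w | eps < `|Yn n w - Y w|] := m_lt _ _ (m_dist _ _ (mYn n) mY).
  have mB := m_lt (fun w => Zn n w - Y w) eps (measurable_funB (mZn n) mY).
  have mC := m_lt (fun w => Zn n w - Yn n w) eps (measurable_funB (mZn n) (mYn n)).
  have incl : [set w | eps < `|Yn n w - Y w|] `<=`
      [set w | eps < Zn n w - Y w] `|` [set w | eps < Zn n w - Yn n w].
    move=> w /=; rewrite ltr_normr => /orP[h|h]; [left|right] => /=.
      by apply: lt_le_trans h _; rewrite lerD2r YnZ.
    by move: h; rewrite opprB => h; apply: lt_le_trans h _; rewrite lerD2r YZ.
  have := fP_sub P _ _ _ mA mB mC incl.
  rewrite /Yn /Y /=; lra.
Unshelve. all: by end_near. Qed.
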